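(* Let $R$ be a proto-ranking on a finite set $\mathcal{X}$, and let $A\subseteq\mathcal{X}$ be such that $[x,y]_{R}\subseteq A$ for all $x,y\in A$ with $xRy$. Then the binary relation $R\cup A^2$ admits a complete and transitive extension.
   Context: A proto-ranking is an irreflexive and transitive binary relation. For a relation $Q$ and $a\,Q\,b$, the order interval is $[a,b]_Q=\{a,b\}\cup\{c: a\,Q\,c\,Q\,b\}$. A relation is complete if it is reflexive and total (for distinct $a,b$, $aQb$ or $bQa$). The strict part of $Q$ is $\{(a,b): aQb,\ \text{not } bQa\}$. A relation $Q'$ is an extension of $Q$ if $Q\subseteq Q'$ and the strict part of $Q$ is contained in the strict part of $Q'$. *)

(* Defs.v *)
From mathcomp Require Import all_boot.
Set Implicit Arguments. Unset Strict Implicit. Unset Printing Implicit Defensive.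

Definition relation (T : Type) := T -> T -> Prop.

Definition proto_ranking (T : Type) (R : relation T) : Prop :=
  (forall a, ~ R a a) /\ (forall a b c, R a b -> R b c -> R a c).

Definition transitiveR (T : Type) (Q : relation T) : Prop :=
  forall a b c, Q a b -> Q b c -> Q a c.

Definition in_order_interval (T : Type) (Q : relation T) (a b c : T) : Prop :=
  c = a \/ c = b \/ (Q a c /\ Q c b).

Definition complete (T : Type) (Q : relation T) : Prop :=
  (forall a, Q a a) /\ (forall a b, a <> b -> Q a b \/ Q b a).

Definition strict_part (T : Type) (Q : relation T) : relation T :=
  fun a b => Q a b /\ ~ Q b a.

Definition extension (T : Type) (Q Q' : relation T) : Prop :=
  (forall a b, Q a b -> Q' a b) /\
  (forall a b, strict_part Q a b -> strict_part Q' a b).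

Definition union_square (T : finType) (R : relation T) (A : {set T}) : relation T :=
  fun a b => R a b \/ (a \in A /\ b \in A).

(* Main.v *)
Require Import Defs.
From mathcomp Require Import all_boot.
From Stdlib Require Import Classical ClassicalEpsilon.
Set Implicit Arguments. Unset Strict Implicit. Unset Printing Implicit Defensive.

Definition EE (T : finType) (A : {set T}) (a b : T) : Prop :=
  a = b \/ (a \in A /\ b \in A).

Definition Rt (T : finType) (R : relation T) (A : {set T}) (a b : T) : Prop :=
  ~ EE A a b /\ exists a' b', EE A a a' /\ EE A b b' /\ R a' b'.

Definition PP (T : finType) (R : relation T) (A : {set T}) (a b : T) : Prop :=
  Rt R A a b \/ exists u, u \in A /\ exists v, v \in A /\ Rt R A a u /\ Rt R A v b.

Lemma EE_sym (T : finType) (A : {set T}) a b : EE A a b -> EE A b a.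
Proof. by case=> [->|[? ?]]; [left|right]. Qed.

Lemma EE_trans (T : finType) (A : {set T}) a b c : EE A a b -> EE A b c -> EE A a c.
Proof.
case=> [->|[Ha Hb]] //; case=> [<-|[Hb' Hc]]; by right.
Qed.

Lemma EE_inA (T : finType) (A : {set T}) a b : EE A a b -> b \in A -> a \in A.
Proof. by case=> [->|[]]. Qed.

Lemma Rt_r (T : finType) (R : relation T) (A : {set T}) a b b2 :
  EE A b b2 -> Rt R A a b -> Rt R A a b2.
Proof.
move=> Hb [nE [a' [b' [H1 [H2 H3]]]]]; split.
- move=> H; apply: nE; apply: EE_trans H (EE_sym Hb).
- exists a', b'; split=> //; split=> //; exact: EE_trans (EE_sym Hb) H2.
Qed.

Section Main.

Lemma Rt_comp (T : finType) (R : relation T) (A : {set T}) :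
  proto_ranking R ->
  (forall x y, x \in A -> y \in A -> R x y ->
     forall c, in_order_interval R x y c -> c \in A) ->
  forall a b c, Rt R A a b -> Rt R A b c -> PP R A a c.
Proof.
move=> [irr tr] hA a b c [nEab [a' [b1 [Ea [Eb1 Rab]]]]] [nEbc [b2 [c' [Eb2 [Ec Rbc]]]]].
case: (classic (b1 = b2)) => [eb|nb].
- subst b2; left; split; last by exists a', c'; split=> //; split=> //; exact: tr Rab Rbc.
  move=> Eac.
  have Eac' : EE A a' c' by apply: EE_trans (EE_trans (EE_sym Ea) Eac) Ec.
  case: Eac' => [eq|[Ha Hc]].
  + subst c'; exact: (irr a' (tr _ _ _ Rab Rbc)).
  + have Hb1 : b1 \in A.
      apply: (hA a' c' Ha Hc (tr _ _ _ Rab Rbc)); right; right; split=> //.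
    apply: nEab; right; split; first exact: EE_inA Ea Ha.
    exact: EE_inA Eb1 Hb1.
- have [Hb1 Hb2] : b1 \in A /\ b2 \in A.
    case: Eb1 => [e1|[? ?]]; case: Eb2 => [e2|[? ?]] //.
    + by exfalso; apply: nb; rewrite -e1 -e2.
    + by rewrite -e1.
    + by rewrite -e2.
  right; exists b1; split=> //; exists b2; split=> //; split.
  + split.
    * move=> H; apply: nEab; exact: EE_trans H (EE_sym Eb1).
    * exists a', b1; split=> //; split=> //; by left.
  + split.
    * move=> H; apply: nEbc; exact: EE_trans Eb2 H.
    * exists b2, c'; split; first by left.
      by split.
Qed.

Lemma PP_trans (T : finType) (R : relation T) (A : {set T}) :
  proto_ranking R ->
  (forall x y, x \in A -> y \in A -> R x y ->
     forall c, in_order_interval R x y c -> c \in A) ->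
  forall a b c, PP R A a b -> PP R A b c -> PP R A a c.
Proof.
move=> hR hA a b c [H1|[u [Hu [v [Hv [H1 H2]]]]]] [H3|[u' [Hu' [v' [Hv' [H3 H4]]]]]].
- exact: Rt_comp H1 H3.
- case: (Rt_comp hR hA H1 H3) => [H|[w [Hw [w2 [Hw2 [H5 H6]]]]]].
  + right; exists u'; split=> //; exists v'; by split.
  + right; exists w; split=> //; exists v'; by split.
- case: (Rt_comp hR hA H2 H3) => [H|[w [Hw [w2 [Hw2 [H5 H6]]]]]].
  + right; exists u; split=> //; exists v; by split.
  + right; exists u; split=> //; exists w2; by split.
- right; exists u; split=> //; exists v'; by split.
Qed.

Lemma PP_irr (T : finType) (R : relation T) (A : {set T}) :
  proto_ranking R ->
  (forall x y, x \in A -> y \in A -> R x y ->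
     forall c, in_order_interval R x y c -> c \in A) ->
  forall a, ~ PP R A a a.
Proof.
move=> [irr tr] hA a [[nE _]|[u [Hu [v [Hv [[nE1 [a1 [u1 [Ea [Eu R1]]]]] [nE2 [v1 [a2 [Ev [Ea2 R2]]]]]]]]]]].
- by apply: nE; left.
- have naA : a \notin A.
    apply/negP=> HaA; apply: nE1; right; by split.
  have ea1 : a = a1 by case: Ea => // [[H _]]; rewrite H in naA.
  have ea2 : a = a2 by case: Ea2 => // [[H _]]; rewrite H in naA.
  subst a1 a2.
  have Hu1 : u1 \in A by case: Eu => [<-|[]].
  have Hv1 : v1 \in A by case: Ev => [<-|[]].
  move/negP: naA; apply.
  apply: (hA v1 u1 Hv1 Hu1 (tr _ _ _ R2 R1)); right; right; by split.
Qed.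

Lemma PP_r (T : finType) (R : relation T) (A : {set T}) a b b2 :
  EE A b b2 -> PP R A a b -> PP R A a b2.
Proof.
move=> Hb [H|[u [Hu [v [Hv [H1 H2]]]]]].
- left; exact: Rt_r Hb H.
- right; exists u; split=> //; exists v; split=> //; split=> //; exact: Rt_r Hb H2.
Qed.

Definition pb (T : finType) (R : relation T) (A : {set T}) (y x : T) : bool :=
  if excluded_middle_informative (PP R A y x) then true else false.

Lemma pbP (T : finType) (R : relation T) (A : {set T}) y x :
  pb R A y x = true <-> PP R A y x.
Proof. by rewrite /pb; case: excluded_middle_informative. Qed.

Definition fS (T : finType) (R : relation T) (A : {set T}) (x : T) : {set T} :=
  [set y | pb R A y x].

End Main.

Theorem mainTheorem14 (T : finType) (R : relation T) (A : {set T}) :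
  proto_ranking R ->
  (forall x y, x \in A -> y \in A -> R x y ->
     forall c, in_order_interval R x y c -> c \in A) ->
  exists Q : relation T,
    extension (union_square R A) Q /\ complete Q /\ transitiveR Q.
Proof.
move=> hR hA.
have mono : forall a b, PP R A a b -> #|fS R A a| < #|fS R A b|.
  move=> a b Hab; apply: proper_card; apply/properP; split.
  - apply/subsetP=> y; rewrite !inE => /pbP Hy; apply/pbP.
    exact: PP_trans hR hA _ _ _ Hy Hab.
  - exists a; rewrite !inE; first by apply/pbP.
    by apply/negP=> /pbP; apply: PP_irr hR hA a.
have eqA : forall a b, a \in A -> b \in A -> fS R A a = fS R A b.
  move=> a b Ha Hb; apply/setP=> y; rewrite !inE.
  apply/idP/idP=> /pbP H; apply/pbP; apply: PP_r H; right; by split.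
exists (fun a b => #|fS R A a| <= #|fS R A b|).
have RP : forall a b, R a b -> ~ (a \in A /\ b \in A) -> PP R A a b.
  move=> a b Rab nA; left; split.
  - case=> [eq|//]; subst b; exact: (proj1 hR a Rab).
  - exists a, b; split; first by left.
    split; first by left.
    done.
split; [split|split].
- move=> a b [Rab|[Ha Hb]].
  + case: (classic (a \in A /\ b \in A)) => [[Ha Hb]|nA].
    * by rewrite (eqA a b Ha Hb).
    * exact: ltnW (mono _ _ (RP _ _ Rab nA)).
  + by rewrite (eqA a b Ha Hb).
- move=> a b [[Rab|[Ha Hb]] nS].
  + have nA : ~ (a \in A /\ b \in A).
      move=> [Ha Hb]; apply: nS; right; by split.
    have := mono _ _ (RP _ _ Rab nA).
    split; first exact: ltnW.
    by rewrite leqNgt H.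
  + by exfalso; apply: nS; right; split.
- split=> //.
  move=> a b _; case: (leqP #|fS R A a| #|fS R A b|) => H; [left|right] => //.
  exact: ltnW.
- move=> a b c H1 H2; exact: leq_trans H1 H2.
Qed.
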